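(* The Segre variety $S_2(3)$ has exactly $136$ Veldkamp lines. Exactly $130$ of them are projective, and together with the $40$ geometric hyperplanes of $S_2(3)$ they form a projective space isomorphic to $\mathrm{PG}(3,3)$ (i.e. every set of four hyperplane sections of $S_2(3)$ by the four planes of $\mathrm{PG}(3,3)$ through a common line is a Veldkamp line). The remaining $6$ Veldkamp lines are non-projective, and each of them consists of four pairwise disjoint ovoids.
   Context: Let $L=\mathrm{PG}(1,3)$, a set of $4$ points. $S_2(3)$ is the point-line incidence structure with point set $L\times L$ (a $4\times4$ grid) whose lines are the rows $\{p\}\times L$ and columns $L\times\{p\}$. A geometric hyperplane is a proper subset $H$ of points such that every line is contained in $H$ or meets $H$ in exactly one point; an ovoid is a geometric hyperplane containing no line. A Veldkamp line of $S_2(3)$ is a set $\{h_1,h_2,h_3,h_4\}$ of four distinct geometric hyperplanes such that all six pairwise intersections $h_i\cap h_j$ ($i\neq j$) are equal. Via the Segre embedding $([x],[y])\mapsto[x\otimes y]$ of $S_2(3)$ into $\mathrm{PG}(3,3)=\mathbb{P}(\mathrm{GF}(3)^2\otimes\mathrm{GF}(3)^2)$, every geometric hyperplane of $S_2(3)$ is the intersection of $S_2(3)$ with a unique plane of $\mathrm{PG}(3,3)$. A Veldkamp line is called projective if its four members are the sections of $S_2(3)$ by the four planes of $\mathrm{PG}(3,3)$ containing a common line, and non-projective otherwise. *)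

(* Defs.v *)
From mathcomp Require Import all_boot all_algebra.
Set Implicit Arguments. Unset Strict Implicit. Unset Printing Implicit Defensive.
Import GRing.Theory.
Local Open Scope ring_scope.

Notation F3 := 'F_3.

(* Normalized homogeneous coordinates: a nonzero row vector whose first
   nonzero entry is 1.  Each point of PG(n-1,3) has exactly one such
   representative. *)
Definition normalized n (v : 'rV[F3]_n) : bool :=
  [exists i : 'I_n, (v 0 i == 1) && [forall j : 'I_n, (j < i)%N ==> (v 0 j == 0)]].

Definition PG13 := {v : 'rV[F3]_2 | normalized v}.

(* Point set of S_2(3): L x L. *)
Definition SP := (PG13 * PG13)%type.

Definition grid_row (p : PG13) : {set SP} := [set u : SP | u.1 == p].
Definition grid_col (p : PG13) : {set SP} := [set u : SP | u.2 == p].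
Definition grid_lines : {set {set SP}} :=
  [set grid_row p | p : PG13] :|: [set grid_col p | p : PG13].

Definition geom_hyperplane (H : {set SP}) : bool :=
  (H != [set: SP]) &&
  [forall l in grid_lines, (l \subset H) || (#|l :&: H| == 1%N)].

Definition ovoid (H : {set SP}) : bool :=
  geom_hyperplane H && [forall l in grid_lines, ~~ (l \subset H)].

Definition veldkamp_line (V : {set {set SP}}) : bool :=
  (#|V| == 4%N) && [forall h in V, geom_hyperplane h] &&
  [forall h1 in V, forall h2 in V, forall h3 in V, forall h4 in V,
     (h1 != h2) ==> (h3 != h4) ==> (h1 :&: h2 == h3 :&: h4)].

(* Segre embedding ([x],[y]) |-> [x (x) y] into PG(3,3) = P(GF(3)^2 (x) GF(3)^2);
   x (x) y is represented by the vectorization of the outer product x^T y. *)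
Definition segre (u : SP) : 'rV[F3]_(2 * 2) := mxvec ((val u.1)^T *m val u.2).

Definition section (a : 'rV[F3]_(2 * 2)) : {set SP} :=
  [set u : SP | segre u *m a^T == 0].

(* A line of PG(3,3) is the row space of a rank-2 matrix M : 'M_(2,4).
   The planes containing it are the [a] (a <> 0) with M a^T = 0.
   The set of sections of S_2(3) by these (four) planes: *)
Definition pencil_sections (M : 'M[F3]_(2, 2 * 2)) : {set {set SP}} :=
  section @: [set a : 'rV[F3]_(2 * 2) | (a != 0) && (M *m a^T == 0)].

Definition projective (V : {set {set SP}}) : bool :=
  [exists M : 'M[F3]_(2, 2 * 2), (\rank M == 2%N) && (V == pencil_sections M)].

(* Main.v *)
Require Import Defs.
From mathcomp Require Import all_boot all_algebra.
From mathcomp Require Import zify.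
Set Implicit Arguments. Unset Strict Implicit. Unset Printing Implicit Defensive.
Import GRing.Theory.
Local Open Scope ring_scope.

Definition cx (n : nat) : nat := nth 1 [:: 1; 0; 1; 1]%N n.
Definition cy (n : nat) : nat := nth 0 [:: 0; 1; 1; 2]%N n.
Definition nrm2 (a b : F3) : bool := (a == 1) || ((a == 0) && (b == 1)).
Definition idx2 (a b : F3) : nat := if a == 0 then 1%N else if b == 0 then 0%N else if b == 1 then 2%N else 3%N.

Notation i0 := (@ord0 1).
Notation i1 := (@lift 2 ord0 ord0).

Lemma I2_cases (p : 'I_2) : p = i0 \/ p = i1.
Proof. by case: p => [[|[|m]] Hp]; [left|right|]; try apply/val_inj. Qed.

Lemma F3c (x : F3) : x = 0 \/ x = 1 \/ x = 2%:R.
Proof. case: x => [[|[|[|m]]] Hm]; [left|right;left|right;right|]; try by apply/val_inj. by []. Qed.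

Lemma normalized2 (v : 'rV[F3]_2) : normalized v = nrm2 (v 0 i0) (v 0 i1).
Proof.
rewrite /normalized /nrm2; apply/existsP/idP.
- case=> i /andP[vi /forallP H]; case: (I2_cases i) => ?; subst i; first by rewrite vi.
  by have := H i0; rewrite /= => ->; rewrite vi orbT.
- case/orP => [h|/andP[h0 h1]]; [exists i0 | exists i1]; rewrite ?h ?h1 /=;
    apply/forallP => j //; case: (I2_cases j) => -> //.
Qed.

Lemma nrm_c n : nrm2 (cx n)%:R (cy n)%:R.
Proof. by case: n => [|[|[|[|n]]]]; rewrite /cx /cy /= ?nth_nil; vm_compute. Qed.

Definition ptv n : 'rV[F3]_2 := \row_j (if j == i0 then (cx n)%:R else (cy n)%:R).
Lemma ptv_ok n : normalized (ptv n).
Proof. by rewrite normalized2 !mxE /=; apply: nrm_c. Qed.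
Definition pt n : PG13 := exist _ (ptv n) (ptv_ok n).

Definition idx (p : PG13) : nat := idx2 (val p 0 i0) (val p 0 i1).

Lemma idx_lt (p : PG13) : (idx p < 4)%N.
Proof. by rewrite /idx /idx2; repeat case: ifP. Qed.

Lemma idx_pt n : (n < 4)%N -> idx (pt n) = n.
Proof. by rewrite /idx /= !mxE /=; case: n => [|[|[|[|n]]]] //= _; vm_compute. Qed.

Lemma coord_gen (a b : F3) : nrm2 a b -> a = (cx (idx2 a b))%:R /\ b = (cy (idx2 a b))%:R.
Proof.
by case: (F3c a) => [->|[->|->]]; case: (F3c b) => [->|[->|->]]; vm_compute.
Qed.

Lemma pcoord (p : PG13) : val p 0 i0 = (cx (idx p))%:R /\ val p 0 i1 = (cy (idx p))%:R.
Proof. by apply: coord_gen; rewrite -normalized2; apply: (valP p). Qed.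

Lemma pt_idx (p : PG13) : pt (idx p) = p.
Proof.
apply/val_inj/rowP => j; rewrite /= mxE; have [c0 c1] := pcoord p.
by case: (I2_cases j) => ->; rewrite ?c0 ?c1.
Qed.

Lemma pt_inj_lt i j : (i < 4)%N -> (j < 4)%N -> pt i = pt j -> i = j.
Proof. by move=> Hi Hj E; rewrite -(idx_pt Hi) -(idx_pt Hj) E. Qed.

Definition get (s : seq bool) (i j : nat) := nth false s (4 * i + j).
Definition I4 := iota 0 4.
Definition rowc s i := all (get s i) I4 || (count (get s i) I4 == 1)%N.
Definition colc s j := all (fun i => get s i j) I4 || (count (fun i => get s i j) I4 == 1)%N.
Definition full s := all (fun i => all (get s i) I4) I4.
Definition ghc s := ~~ full s && all (rowc s) I4 && all (colc s) I4.
Definition ovc s := ghc s && all (fun i => ~~ all (get s i) I4) I4 && all (fun j => ~~ all (fun i => get s i j) I4) I4.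
Definition andl (s t : seq bool) := [seq nth false s n && nth false t n | n <- iota 0 16].
Definition disjc (s t : seq bool) := all (fun n => ~~ (nth false s n && nth false t n)) (iota 0 16).

Definition cd (u : SP) : nat := (4 * idx u.1 + idx u.2)%N.
Definition D (s : seq bool) : {set SP} := [set u : SP | nth false s (cd u)].
Definition dec (n : nat) : SP := (pt (n %/ 4), pt (n %% 4)).
Definition enc (H : {set SP}) : seq bool := [seq dec n \in H | n <- iota 0 16].

Lemma cd_lt u : (cd u < 16)%N.
Proof. rewrite /cd; have := idx_lt u.1; have := idx_lt u.2; lia. Qed.

Lemma divmod4 a b : (b < 4)%N -> ((4 * a + b) %/ 4 = a /\ (4 * a + b) %% 4 = b)%N.
Proof. by move=> Hb; rewrite mulnC divnMDl // divn_small // addn0 modnMDl modn_small. Qed.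

Lemma cd_dec n : (n < 16)%N -> cd (dec n) = n.
Proof.
move=> Hn; rewrite /cd /= !idx_pt ?ltn_mod //; last by rewrite ltn_divLR.
by rewrite {3}(divn_eq n 4) mulnC.
Qed.

Lemma dec_cd u : dec (cd u) = u.
Proof.
case: u => p q; rewrite /dec /cd /=; have [-> ->] := divmod4 (idx p) (idx_lt q).
by rewrite !pt_idx.
Qed.

Lemma inD s u : (u \in D s) = nth false s (cd u).
Proof. by rewrite inE. Qed.

Lemma ptD s i j : (i < 4)%N -> (j < 4)%N -> ((pt i, pt j) \in D s) = get s i j.
Proof. by move=> Hi Hj; rewrite inD /cd /= !idx_pt. Qed.

Lemma size_enc H : size (enc H) = 16%N.
Proof. by rewrite size_map size_iota. Qed.

Lemma D_enc H : D (enc H) = H.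
Proof.
apply/setP => u; rewrite inD (nth_map 0%N) ?size_iota ?cd_lt // nth_iota ?cd_lt //.
by rewrite add0n dec_cd.
Qed.

Lemma D_inj s t : size s = 16%N -> size t = 16%N -> D s = D t -> s = t.
Proof.
move=> Hs Ht E; apply: (@eq_from_nth _ false); first by rewrite Hs Ht.
move=> n; rewrite Hs => Hn.
by rewrite -(cd_dec Hn) -!inD E.
Qed.

Lemma D_eq s t : size s = 16%N -> size t = 16%N -> (D s == D t) = (s == t).
Proof. by move=> Hs Ht; apply/eqP/eqP => [/D_inj|->]; [apply|]. Qed.

Lemma size_andl s t : size (andl s t) = 16%N.
Proof. by rewrite size_map size_iota. Qed.

Lemma D_and s t : D (andl s t) = D s :&: D t.
Proof.
apply/setP => u; rewrite !inE (nth_map 0%N) ?size_iota ?cd_lt //.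
by rewrite nth_iota ?cd_lt.
Qed.

Lemma memI4 i : (i \in I4) = (i < 4)%N.
Proof. by rewrite mem_iota. Qed.

Lemma all_pt (P : PG13 -> bool) : [forall p, P p] = all (fun i => P (pt i)) I4.
Proof.
apply/forallP/allP => [H i _ | H p]; first exact: H.
by rewrite -(pt_idx p); apply: H; rewrite memI4 idx_lt.
Qed.

Lemma lines_forall (P : {set SP} -> bool) :
  [forall l in grid_lines, P l] =
  all (fun i => P (grid_row (pt i))) I4 && all (fun i => P (grid_col (pt i))) I4.
Proof.
rewrite -(all_pt (fun p => P (grid_row p))) -(all_pt (fun p => P (grid_col p))).
apply/forall_inP/andP => [H | [/forallP H1 /forallP H2] l].
- split; apply/forallP => p; apply: H; rewrite inE; apply/orP; [left|right];
    by apply/imsetP; exists p.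
- by rewrite inE => /orP[/imsetP[p _ ->]|/imsetP[p _ ->]].
Qed.

Lemma row_sub s i : (i < 4)%N -> (grid_row (pt i) \subset D s) = all (get s i) I4.
Proof.
move=> Hi; apply/subsetP/allP => [H j | H [p q]].
- rewrite memI4 => Hj; rewrite -ptD //; apply: H; by rewrite inE.
- rewrite inE /= => /eqP ->; rewrite -(pt_idx q) ptD ?idx_lt //; apply: H.
  by rewrite memI4 idx_lt.
Qed.

Lemma col_sub s j : (j < 4)%N -> (grid_col (pt j) \subset D s) = all (fun i => get s i j) I4.
Proof.
move=> Hj; apply/subsetP/allP => [H i | H [p q]].
- rewrite memI4 => Hi; rewrite -ptD //; apply: H; by rewrite inE.
- rewrite inE /= => /eqP ->; rewrite -(pt_idx p) ptD ?idx_lt //; apply: H.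
  by rewrite memI4 idx_lt.
Qed.

Lemma card4 (P : nat -> bool) : #|[set j : 'I_4 | P j]| = count P I4.
Proof.
rewrite -sum1_card big_mkcond /= !big_ord_recl big_ord0 /= !inE.
by rewrite /I4 /= !addnA addn0.
Qed.

Lemma row_card s i : (i < 4)%N -> #|grid_row (pt i) :&: D s| = count (get s i) I4.
Proof.
move=> Hi; rewrite -card4.
have -> : grid_row (pt i) :&: D s = [set (pt i, pt (nat_of_ord j)) | j : 'I_4 in [set j : 'I_4 | get s i j]].
  apply/setP => [[p q]]; rewrite !inE /=; apply/andP/imsetP.
  - case=> /eqP -> Hq; exists (Ordinal (idx_lt q)); last by rewrite /= pt_idx.
    by rewrite inE /= -ptD ?idx_lt // ?pt_idx ?inD.
  - case=> j; rewrite inE => Hj [-> ->]; split => //; by rewrite -inD ptD.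
apply: card_imset => j1 j2 /(congr1 snd) /= E; apply/val_inj; exact: (pt_inj_lt (ltn_ord j1) (ltn_ord j2) E).
Qed.

Lemma col_card s j : (j < 4)%N -> #|grid_col (pt j) :&: D s| = count (fun i => get s i j) I4.
Proof.
move=> Hj; rewrite -card4.
have -> : grid_col (pt j) :&: D s = [set (pt (nat_of_ord i), pt j) | i : 'I_4 in [set i : 'I_4 | get s i j]].
  apply/setP => [[p q]]; rewrite !inE /=; apply/andP/imsetP.
  - case=> /eqP -> Hq; exists (Ordinal (idx_lt p)); last by rewrite /= pt_idx.
    by rewrite inE /= -ptD ?idx_lt // ?pt_idx ?inD.
  - case=> i; rewrite inE => Hi [-> ->]; split => //; by rewrite -inD ptD.
apply: card_imset => j1 j2 /(congr1 fst) /= E; apply/val_inj; exact: (pt_inj_lt (ltn_ord j1) (ltn_ord j2) E).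
Qed.

Lemma full_D s : (D s == setT) = full s.
Proof.
apply/eqP/allP => [E i Hi | H].
- apply/allP => j; rewrite memI4 in Hi *; rewrite memI4 => Hj; by rewrite -ptD // E inE.
- apply/setP => [[p q]]; rewrite in_setT -(pt_idx p) -(pt_idx q) ptD ?idx_lt //.
  have /allP := H (idx p) (etrans (memI4 _) (idx_lt p)); apply; by rewrite memI4 idx_lt.
Qed.

Lemma gh_D s : geom_hyperplane (D s) = ghc s.
Proof.
rewrite /geom_hyperplane lines_forall full_D /ghc -andbA; congr (_ && (_ && _)).
- apply: eq_in_all => i; rewrite memI4 => Hi; by rewrite row_sub // row_card.
- apply: eq_in_all => i; rewrite memI4 => Hi; by rewrite col_sub // col_card.
Qed.

Lemma ov_D s : ovoid (D s) = ovc s.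
Proof.
rewrite /ovoid gh_D lines_forall /ovc -andbA; congr (_ && (_ && _)).
- apply: eq_in_all => i; rewrite memI4 => Hi; by rewrite row_sub.
- apply: eq_in_all => i; rewrite memI4 => Hi; by rewrite col_sub.
Qed.

Lemma disj_D s t : [disjoint D s & D t] = disjc s t.
Proof.
apply/idP/allP => [H n | H].
- rewrite mem_iota add0n => Hn; apply/negP => /andP[h1 h2].
  by have := disjointFr H; move/(_ (dec n)); rewrite !inD cd_dec // h1 h2 => /(_ isT).
- rewrite disjoint_subset; apply/subsetP => u; rewrite !inE => h1; apply/negP => h2.
  by have := H (cd u); rewrite mem_iota add0n cd_lt h1 h2 => /(_ isT).
Qed.

Definition F3l : seq nat := [:: 0; 1; 2]%N.
Fixpoint allF n : seq (seq nat) := if n is n'.+1 then [seq b :: l | b <- F3l, l <- allF n'] else [:: [::]].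
Local Open Scope nat_scope.
Definition secv (q : seq nat) (i j : nat) : nat :=
  (cx i * nth 0 q 0 + cy i * nth 0 q 2) * cx j + (cx i * nth 0 q 1 + cy i * nth 0 q 3) * cy j.
Definition pairs16 := Eval vm_compute in [seq (n %/ 4, n %% 4) | n <- iota 0 16].
Definition secc q := [seq 3 %| secv q p.1 p.2 | p <- pairs16].
Definition kerc (m q : seq nat) : bool :=
  (3 %| nth 0 m 0 * nth 0 q 0 + nth 0 m 1 * nth 0 q 1 + nth 0 m 2 * nth 0 q 2 + nth 0 m 3 * nth 0 q 3) &&
  (3 %| nth 0 m 4 * nth 0 q 0 + nth 0 m 5 * nth 0 q 1 + nth 0 m 6 * nth 0 q 2 + nth 0 m 7 * nth 0 q 3).
Definition pen m := undup [seq secc q | q <- allF 4 & (q != [:: 0; 0; 0; 0]) && kerc m q].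
Definition comb0 (m v : seq nat) := all (fun k => 3 %| nth 0 v 0 * nth 0 m k + nth 0 v 1 * nth 0 m (4 + k)) I4.
Definition rank2c m := all (fun v => (v == [:: 0; 0]) || ~~ comb0 m v) (allF 2).
Local Open Scope ring_scope.

Lemma nth_pairs16 n : (n < 16)%N -> nth (0, 0)%N pairs16 n = (n %/ 4, n %% 4)%N.
Proof. by do 16 (case: n => [|n] //). Qed.

Lemma F3eq0 n : ((n%:R : F3) == 0) = (3 %| n)%N.
Proof. by rewrite (dvdn_pcharf (pchar_Fp _)). Qed.

Lemma F3lt (x : F3) : (nat_of_ord x < 3)%N.
Proof. exact: ltn_ord x. Qed.

Lemma F3val n : (n < 3)%N -> nat_of_ord (n%:R : F3) = n.
Proof. by move=> Hn; rewrite val_Fp_nat // modn_small. Qed.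

Notation mi := (@mxvec_index 2 2).

Lemma mx11_eq0 (B : 'M[F3]_1) : (B == 0) = (B 0 0 == 0).
Proof.
apply/eqP/eqP => [->|h]; first by rewrite mxE.
by apply/matrixP => i j; rewrite !ord1 mxE h.
Qed.

Lemma sum4 (f : 'I_(2*2) -> F3) :
  \sum_k f k = f (mi i0 i0) + f (mi i0 i1) + f (mi i1 i0) + f (mi i1 i1).
Proof.
rewrite (reindex _ (curry_mxvec_bij 2 2)) /=.
have -> : \sum_j f (uncurry mi j) = \sum_i \sum_j f (mi i j) by rewrite pair_bigA; apply: eq_bigr => -[i j].
rewrite !big_ord_recl !big_ord0.
by rewrite !addr0 addrA.
Qed.

Definition entA (a : 'rV[F3]_(2*2)) : seq nat :=
  [:: nat_of_ord (a 0 (mi i0 i0)); nat_of_ord (a 0 (mi i0 i1));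
      nat_of_ord (a 0 (mi i1 i0)); nat_of_ord (a 0 (mi i1 i1))].

Lemma section_D a : section a = D (secc (entA a)).
Proof.
apply/setP => u; rewrite inD /section inE /segre.
have -> : a^T = (mxvec (vec_mx a))^T by rewrite vec_mxK.
rewrite mxvec_dotmul mx11_eq0.
rewrite /secc (nth_map (0, 0)%N); last by have := cd_lt u.
rewrite nth_pairs16 ?cd_lt // /cd; have [-> ->] := divmod4 (idx u.1) (idx_lt u.2).
rewrite -F3eq0 /secv /= !(natrD, natrM) !natr_Zp.
have [x0 x1] := pcoord (fst u); have [y0 y1] := pcoord (snd u).
rewrite !mxE !big_ord_recl !big_ord0 !mxE !big_ord_recl !big_ord0 !mxE.
rewrite x0 x1 y0 y1.
by rewrite !addr0.
Qed.

Lemma F3z (x : F3) : (x == 0) = (nat_of_ord x == 0%N).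
Proof. by []. Qed.

Lemma rv4_eq0 (b : 'rV[F3]_(2*2)) : (b == 0) =
  [&& b 0 (mi i0 i0) == 0, b 0 (mi i0 i1) == 0, b 0 (mi i1 i0) == 0 & b 0 (mi i1 i1) == 0].
Proof.
apply/eqP/and4P => [->|[/eqP h1 /eqP h2 /eqP h3 /eqP h4]]; first by rewrite !mxE eqxx.
apply/rowP => k; rewrite mxE; case/mxvec_indexP: k => p r.
by case: (I2_cases p) => ->; case: (I2_cases r) => ->.
Qed.

Lemma cv2_eq0 (B : 'M[F3]_(2,1)) : (B == 0) = (B i0 0 == 0) && (B i1 0 == 0).
Proof.
apply/eqP/andP => [->|[/eqP h1 /eqP h2]]; first by rewrite !mxE eqxx.
by apply/matrixP => i j; rewrite ord1 mxE; case: (I2_cases i) => ->.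
Qed.

Lemma nz_iff a : (a != 0) = (entA a != [:: 0; 0; 0; 0]%N).
Proof. by rewrite rv4_eq0 /entA /= !F3z !eqseq_cons andbT. Qed.

Definition entM (M : 'M[F3]_(2, 2*2)) : seq nat :=
  [:: nat_of_ord (M i0 (mi i0 i0)); nat_of_ord (M i0 (mi i0 i1));
      nat_of_ord (M i0 (mi i1 i0)); nat_of_ord (M i0 (mi i1 i1));
      nat_of_ord (M i1 (mi i0 i0)); nat_of_ord (M i1 (mi i0 i1));
      nat_of_ord (M i1 (mi i1 i0)); nat_of_ord (M i1 (mi i1 i1))].

Lemma ker_iff M a : (M *m a^T == 0) = kerc (entM M) (entA a).
Proof.
rewrite cv2_eq0 /kerc /entM /entA /= -!F3eq0 !(natrD, natrM) !natr_Zp.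
by rewrite !mxE !sum4 !mxE.
Qed.

Lemma F3l_lt x : (x \in F3l) = (x < 3)%N.
Proof. by case: x => [|[|[|x]]]. Qed.

Lemma allF_in n l : size l = n -> all (fun x => x < 3)%N l -> l \in allF n.
Proof.
elim: n l => [|n IH] [|x l] //.
move=> [Hs] /andP[Hx Hl].
by apply/allpairsP; exists (x, l); rewrite /= F3l_lt Hx IH.
Qed.

Lemma allF_size n l : l \in allF n -> size l = n /\ all (fun x => x < 3)%N l.
Proof.
elim: n l => [|n IH] l; first by rewrite inE => /eqP ->.
case/allpairsP => -[x l'] /= [Hx Hl ->]; have [<- H] := IH _ Hl.
by rewrite /= -F3l_lt Hx H.
Qed.

Lemma entA_lt a : all (fun x => x < 3)%N (entA a).
Proof. by rewrite /= !F3lt. Qed.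

Lemma entM_lt M : all (fun x => x < 3)%N (entM M).
Proof. by rewrite /= !F3lt. Qed.

Definition mkA (q : seq nat) : 'rV[F3]_(2*2) :=
  mxvec (\matrix_(p, r) ((nth 0%N q (2 * p + r))%:R : F3)).

Lemma entA_mkA q : q \in allF 4 -> entA (mkA q) = q.
Proof.
case/allF_size; case: q => [|q0 [|q1 [|q2 [|q3 [|]]]]] //= _ /and5P[h0 h1 h2 h3 _].
by rewrite /entA /mkA !mxvecE !mxE /= !F3val.
Qed.

Definition mkM (m : seq nat) : 'M[F3]_(2, 2*2) :=
  \matrix_(i, k) (mxvec (\matrix_(p, r) ((nth 0%N m (4 * i + 2 * p + r))%:R : F3))) 0 k.

Lemma entM_mkM m : m \in allF 8 -> entM (mkM m) = m.
Proof.
case/allF_size; case: m => [|m0 [|m1 [|m2 [|m3 [|m4 [|m5 [|m6 [|m7 [|]]]]]]]]] //= _.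
case/and5P => h0 h1 h2 h3 /and5P[h4 h5 h6 h7 _].
by rewrite /entM /mkM !mxE !mxvecE !mxE /= !F3val.
Qed.

Definition K (M : 'M[F3]_(2, 2*2)) := [set a : 'rV[F3]_(2*2) | (a != 0) && (M *m a^T == 0)].

Lemma pencil_D M : pencil_sections M = [set y in map D (pen (entM M))].
Proof.
apply/setP => y; rewrite inE; apply/imsetP/mapP.
- case=> a; rewrite inE nz_iff ker_iff => Ha ->.
  exists (secc (entA a)); last exact: section_D.
  rewrite mem_undup; apply/mapP; exists (entA a) => //.
  by rewrite mem_filter Ha allF_in ?entA_lt.
- case=> s; rewrite mem_undup => /mapP[q]; rewrite mem_filter => /andP[Hq HqF] -> ->.
  exists (mkA q); last by rewrite section_D entA_mkA.
  by rewrite inE nz_iff ker_iff entA_mkA.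
Qed.

Definition entV (v : 'rV[F3]_2) : seq nat := [:: nat_of_ord (v 0 i0); nat_of_ord (v 0 i1)].
Definition mkV (l : seq nat) : 'rV[F3]_2 := \row_j ((nth 0%N l j)%:R : F3).

Lemma entV_mkV l : l \in allF 2 -> entV (mkV l) = l.
Proof.
case/allF_size; case: l => [|l0 [|l1 [|]]] //= _ /and3P[h0 h1 _].
by rewrite /entV /mkV !mxE /= !F3val.
Qed.

Lemma entV_lt v : all (fun x => x < 3)%N (entV v).
Proof. by rewrite /= !F3lt. Qed.

Lemma v0_iff (v : 'rV[F3]_2) : (v == 0) = (entV v == [:: 0; 0]%N).
Proof.
rewrite /entV !eqseq_cons andbT -!F3z; apply/eqP/andP => [->|[/eqP h0 /eqP h1]].
  by rewrite !mxE.
by apply/rowP => j; rewrite mxE; case: (I2_cases j) => ->.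
Qed.

Lemma vM_iff (v : 'rV[F3]_2) M : (v *m M == 0) = comb0 (entM M) (entV v).
Proof.
rewrite rv4_eq0 /comb0 /entM /entV /= andbT -!F3eq0 !(natrD, natrM) !natr_Zp.
by rewrite !mxE !big_ord_recl !big_ord0 !addr0.
Qed.

Lemma rowfree_iff (M : 'M[F3]_(2, 2*2)) : row_free M = [forall v : 'rV[F3]_2, (v == 0) || ~~ (v *m M == 0)].
Proof.
apply/idP/forallP => [Hf v | H].
  by rewrite (mulmx_free_eq0 _ Hf); case: (v == 0).
apply/negPn/negP => nf.
have : kermx M != 0 by rewrite kermx_eq0.
case/matrix0Pn => i [j Hij].
have Hr : row i (kermx M) != 0 by apply/matrix0Pn; exists 0, j; rewrite mxE.
have := H (row i (kermx M)); rewrite -row_mul mulmx_ker row0 eqxx orbF.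
by rewrite (negbTE Hr).
Qed.

Lemma rank_iff M : (\rank M == 2)%N = rank2c (entM M).
Proof.
rewrite -/(row_free M) rowfree_iff; apply/forallP/allP => [H l Hl | H v].
- have := H (mkV l); by rewrite v0_iff vM_iff entV_mkV.
- by rewrite v0_iff vM_iff; apply: H; apply: allF_in => //; apply: entV_lt.
Qed.

Fixpoint allc {T} (a : T -> bool) (s : seq T) :=
  if s is x :: s' then (if a x then allc a s' else false) else true.

Lemma allcE {T} (a : T -> bool) s : allc a s = all a s.
Proof. by elim: s => //= x s IH; rewrite IH; case: (a x). Qed.

Definition allq (U : seq (seq bool)) :=
  allc (fun s1 => allc (fun s2 => allc (fun s3 => allc (fun s4 =>
    if s1 == s2 then true else if s3 == s4 then true else andl s1 s2 == andl s3 s4) U) U) U) U.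
Definition vkc (L : seq (seq bool)) := let U := undup L in
  if (size U == 4)%N then (if allq U then allc ghc U else false) else false.

Section VK.
Variable L : seq (seq bool).
Hypothesis HL : forall s, s \in L -> size s = 16%N.
Let V := [set y in map D L].

Lemma inV h : (h \in V) = (h \in map D L).
Proof. by rewrite inE. Qed.

Lemma forall_V (P : {set SP} -> bool) (Q : seq bool -> bool) :
  (forall s, s \in L -> P (D s) = Q s) ->
  [forall (h | h \in V), P h] = allc Q (undup L).
Proof.
move=> H; rewrite allcE; apply/forall_inP/allP => [A s | A h].
- by rewrite mem_undup => Hs; rewrite -H // A // inV map_f.
- by rewrite inV => /mapP[s Hs ->]; rewrite H // A // mem_undup.
Qed.

Lemma card_V : #|V| = size (undup L).
Proof.
rewrite cardsE.
have -> : #|[seq D s | s <- L]| = #|[seq D s | s <- undup L]|.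
  by apply: eq_card => y; apply/mapP/mapP => -[s Hs ->]; exists s; rewrite ?mem_undup in Hs *.
have U : uniq [seq D s | s <- undup L].
  rewrite (map_inj_in_uniq) ?undup_uniq // => s t Hs Ht.
  by apply: D_inj; apply: HL; rewrite -mem_undup.
by rewrite (card_uniqP U) size_map.
Qed.

Lemma vk_D : veldkamp_line V = vkc L.
Proof.
have -> : vkc L = (size (undup L) == 4)%N && allc ghc (undup L) && allq (undup L).
  by rewrite /vkc; case: (size _ == 4)%N; case: (allq _); case: (allc _ _).
rewrite /veldkamp_line card_V (@forall_V _ ghc); last by move=> s _; apply: gh_D.
congr (_ && _).
apply: forall_V => s1 H1; apply: forall_V => s2 H2; apply: forall_V => s3 H3;
  apply: forall_V => s4 H4.
rewrite !D_eq ?HL // -!D_and D_eq ?size_andl //.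
by case: (s1 == s2); case: (s3 == s4).
Qed.

End VK.

Fixpoint allbs n : seq (seq bool) :=
  if n is n'.+1 then [seq b :: l | b <- [:: true; false], l <- allbs n'] else [:: [::]].
Definition hl := Eval vm_compute in [seq s <- allbs 16 | ghc s].
Definition hl' i := nth [::] hl i.

Fixpoint allbsP n (P : seq bool -> bool) : bool :=
  if n is n'.+1 then allbsP n' (fun l => P (true :: l)) && allbsP n' (fun l => P (false :: l))
  else P [::].

Lemma allbsP_ok n P s : allbsP n P -> size s = n -> P s.
Proof.
elim: n P s => [|n IH] P [|b s] //= /andP[H1 H2] [Hs].
by case: b; [apply: (IH (fun l => P (true :: l))) | apply: (IH (fun l => P (false :: l)))].
Qed.

Fixpoint choose (s : seq nat) k : seq (seq nat) :=
  match s with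
  | [::] => if k is 0 then [:: [::]] else [::]
  | x :: s' => if k is k'.+1 then map (cons x) (choose s' k') ++ choose s' k else [:: [::]]
  end.

Fixpoint chf (P : seq nat -> bool) (f : seq nat -> seq nat) (s : seq nat) k : seq (seq nat) :=
  match s with
  | [::] => if k is 0 then (if P (f [::]) then [:: f [::]] else [::]) else [::]
  | x :: s' => if k is k'.+1 then chf P (fun l => f (x :: l)) s' k' ++ chf P f s' k
               else (if P (f [::]) then [:: f [::]] else [::])
  end.

Lemma chfE P f s k : chf P f s k = [seq y <- map f (choose s k) | P y].
Proof.
elim: s f k => [|x s IH] f [|k] //=.
by rewrite !IH map_cat filter_cat -map_comp.
Qed.

Lemma mem_choose s x : subseq x s -> x \in choose s (size x).
Proof.
elim: s x => [|y s IH] [|a x] //=.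
case: ifP => [/eqP <- Hx | _ Hx]; rewrite mem_cat; apply/orP.
- by left; apply: map_f; apply: IH.
- by right; apply: (IH (a :: x)).
Qed.

Lemma choose_sub s k x : x \in choose s k -> subseq x s /\ size x = k.
Proof.
elim: s k x => [|y s IH] [|k] x //=; rewrite ?inE.
- by move/eqP ->.
- by move/eqP ->.
- rewrite mem_cat => /orP[/mapP[x' /IH [H1 H2] ->] | /IH [H1 H2]].
    by rewrite /= eqxx H1 H2.
  split => //; exact: (subseq_trans H1 (subseq_cons s y)).
Qed.

Lemma filter_subseq_eq (s x : seq nat) : uniq s -> subseq x s -> [seq i <- s | i \in x] = x.
Proof.
elim: s x => [|y s IH] x; first by rewrite subseq0 => _ /eqP ->.
rewrite [uniq _]/= => /andP[ys us]; case: x => [|a x].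
  by move=> _; elim: (y :: s) => //= z l IHl; rewrite in_nil.
rewrite [subseq _ _]/=.
case: ifP => [/eqP E Hx | ay Hx].
- subst a; rewrite /= inE eqxx /=; congr (_ :: _).
  rewrite -{2}(IH x us Hx); apply: eq_in_filter => z zs; rewrite inE.
  by case: eqP => // E0; move: ys; rewrite -E0 zs.
- have yn : y \notin a :: x by apply/negP => /(mem_subseq Hx); rewrite (negbTE ys).
  by rewrite /= (negbTE yn) IH.
Qed.

Lemma hl_ok : allbsP 16 (fun s => ghc s == (s \in hl)). Proof. by vm_compute. Qed.
Lemma hl_size : size hl = 40%N. Proof. by vm_compute. Qed.
Lemma hl_uniq : uniq hl. Proof. by vm_compute. Qed.
Lemma hl_sz : all (fun s => size s == 16)%N hl. Proof. by vm_compute. Qed.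

Definition canon (L : seq (seq bool)) := [seq i <- iota 0 40 | hl' i \in L].
Definition R0 := chf (fun x => vkc (map hl' x)) id (iota 0 40) 4.
Definition R := Eval vm_compute in R0.
Lemma R_eq : R = R0. Proof. by vm_compute. Qed.
Definition PK0 := [seq canon (pen m) | m <- allF 8 & rank2c m].
Definition PK := Eval vm_compute in PK0.
Lemma PK_eq : PK = PK0. Proof. by vm_compute. Qed.
Lemma R_size : size R = 136%N. Proof. by vm_compute. Qed.
Lemma R_uniq : uniq R. Proof. by vm_compute. Qed.
Lemma RPK_size : size [seq x <- R | x \in PK] = 130%N. Proof. by vm_compute. Qed.
Lemma P1c : allc (fun m => if rank2c m then vkc (pen m) else true) (allF 8). Proof. by vm_compute. Qed.
Lemma P3c : all (fun x => (x \notin PK) ==> (all ovc (map hl' x) &&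
   all (fun s => all (fun t => (s == t) || disjc s t) (map hl' x)) (map hl' x))) R.
Proof. by vm_compute. Qed.

Lemma hl_mem_size s : s \in hl -> size s = 16%N.
Proof. by move=> Hs; have /allP/(_ s Hs)/eqP := hl_sz. Qed.

Lemma hl'_size i : (i < 40)%N -> size (hl' i) = 16%N.
Proof. by move=> Hi; apply: hl_mem_size; rewrite /hl' mem_nth ?hl_size. Qed.

Lemma hl'_inj i j : (i < 40)%N -> (j < 40)%N -> hl' i = hl' j -> i = j.
Proof.
move=> Hi Hj E; apply/eqP; rewrite -(nth_uniq [::] _ _ hl_uniq) ?hl_size //.
by apply/eqP.
Qed.

Lemma gh_hl H : geom_hyperplane H -> exists2 i, (i < 40)%N & H = D (hl' i).
Proof.
move=> HH; have Hin : enc H \in hl.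
  have := allbsP_ok hl_ok (size_enc H); move/eqP <-; by rewrite -gh_D D_enc.
exists (index (enc H) hl); first by rewrite -hl_size index_mem.
by rewrite /hl' nth_index // D_enc.
Qed.

Lemma hl_gh s : s \in hl -> geom_hyperplane (D s).
Proof. move=> Hs; rewrite gh_D; have := allbsP_ok hl_ok (hl_mem_size Hs); by rewrite Hs => /eqP. Qed.

Definition fV (V : {set {set SP}}) := [seq i <- iota 0 40 | D (hl' i) \in V].
Definition Vs (x : seq nat) := [set y in map D (map hl' x)].

Lemma fV_sub (V : {set {set SP}}) : subseq (fV V) (iota 0 40).
Proof. exact: filter_subseq. Qed.

Lemma Vrepr (V : {set {set SP}}) : [forall h in V, geom_hyperplane h] -> V = Vs (fV V).
Proof.
move/forall_inP => HV; apply/setP => h; rewrite inE; apply/idP/mapP.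
- move=> hV; have [i Hi Eh] := gh_hl (HV h hV); exists (hl' i) => //.
  by apply/mapP; exists i => //; rewrite mem_filter -Eh hV mem_iota.
- by case=> s /mapP[i]; rewrite mem_filter => /andP[Hi _] -> ->.
Qed.

Lemma fV_canon L : (forall s, s \in L -> size s = 16%N) -> fV [set y in map D L] = canon L.
Proof.
move=> HL; apply: eq_in_filter => i; rewrite mem_iota add0n => Hi; rewrite inE.
apply/mapP/idP => [[s Hs E]|H]; last by exists (hl' i).
by rewrite (D_inj (hl'_size Hi) (HL _ Hs) E).
Qed.

Lemma canon_x x : subseq x (iota 0 40) -> canon (map hl' x) = x.
Proof.
move=> Hx; rewrite /canon -[in RHS](filter_subseq_eq (iota_uniq 0 40) Hx).
apply: eq_in_filter => i; rewrite mem_iota add0n => Hi.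
apply/mapP/idP => [[j Hj E]|]; last by exists i.
have Hj40 : (j < 40)%N by have := mem_subseq Hx Hj; rewrite mem_iota add0n.
by rewrite (hl'_inj Hi Hj40 E).
Qed.

Lemma Vs_size x : subseq x (iota 0 40) -> forall s, s \in map hl' x -> size s = 16%N.
Proof.
move=> Hx s /mapP[i Hi ->]; apply: hl'_size.
by have := mem_subseq Hx Hi; rewrite mem_iota add0n.
Qed.

Lemma fVs x : subseq x (iota 0 40) -> fV (Vs x) = x.
Proof. by move=> Hx; rewrite /Vs fV_canon ?canon_x //; apply: Vs_size. Qed.

Lemma vk_gh (V : {set {set SP}}) : veldkamp_line V -> [forall h in V, geom_hyperplane h].
Proof. by case/andP => /andP[]. Qed.

Lemma fV_inj V1 V2 : veldkamp_line V1 -> veldkamp_line V2 -> fV V1 = fV V2 -> V1 = V2.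
Proof. by move=> H1 H2 E; rewrite (Vrepr (vk_gh H1)) (Vrepr (vk_gh H2)) E. Qed.

Lemma vk_R (V : {set {set SP}}) : veldkamp_line V -> fV V \in R.
Proof.
move=> HV; have Hx := fV_sub V.
have Hvk : vkc (map hl' (fV V)).
  by rewrite -(vk_D (Vs_size Hx)) -/(Vs (fV V)) -(Vrepr (vk_gh HV)).
have ux : uniq (fV V) by apply: filter_uniq; apply: iota_uniq.
have um : uniq (map hl' (fV V)).
  rewrite map_inj_in_uniq // => i j Hi Hj; apply: hl'_inj.
  - by have := mem_subseq Hx Hi; rewrite mem_iota add0n.
  - by have := mem_subseq Hx Hj; rewrite mem_iota add0n.
have Hsz : size (fV V) = 4%N.
  move: Hvk; rewrite /vkc undup_id // size_map; by case: ifP => // /eqP.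
rewrite R_eq.
rewrite /R0.
rewrite chfE.
rewrite map_id mem_filter Hvk andTb.
have := mem_choose Hx; by rewrite Hsz.
Qed.

Lemma R_vk x : x \in R -> veldkamp_line (Vs x) /\ fV (Vs x) = x.
Proof.
rewrite R_eq /R0 chfE map_id mem_filter => /andP[Hvk /choose_sub [Hx _]].
by split; [rewrite /Vs vk_D //; apply: Vs_size | apply: fVs].
Qed.

Lemma count_lemma (A : {set {set {set SP}}}) (Rl : seq (seq nat)) :
  uniq Rl -> (forall V, V \in A -> veldkamp_line V) ->
  (forall V, V \in A -> fV V \in Rl) -> (forall x, x \in Rl -> exists2 V, V \in A & fV V = x) ->
  #|A| = size Rl.
Proof.
move=> uR HA H1 H2; rewrite cardE -(size_map fV); apply: perm_size; apply: uniq_perm => //.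
- have Hinj : {in enum A &, injective fV}.
    by move=> V1 V2; rewrite !mem_enum => h1 h2; exact: fV_inj (HA _ h1) (HA _ h2).
  by rewrite (map_inj_in_uniq Hinj) enum_uniq.
- move=> x; apply/mapP/idP => [[V HV ->]|Hx]; first by apply: H1; rewrite -mem_enum.
  by have [V HV <-] := H2 x Hx; exists V; rewrite ?mem_enum.
Qed.

Lemma count136 : #|[set V : {set {set SP}} | veldkamp_line V]| = 136%N.
Proof.
rewrite -R_size; apply: count_lemma R_uniq _ _ _ => [V|V|x Hx]; rewrite ?in_set //.
- exact: vk_R.
- by have [H1 H2] := R_vk Hx; exists (Vs x); rewrite ?in_set.
Qed.

Lemma pen_size m s : s \in pen m -> size s = 16%N.
Proof. by rewrite mem_undup => /mapP[q _ ->]; rewrite size_map. Qed.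

Lemma pencil_vk M : \rank M = 2%N -> veldkamp_line (pencil_sections M).
Proof.
move=> Hr; rewrite pencil_D vk_D; last exact: pen_size.
have := P1c; rewrite allcE => /allP/(_ (entM M)).
rewrite (allF_in (n:=8)) ?entM_lt // -rank_iff Hr eqxx; apply => //.
Qed.

Lemma proj_fV (V : {set {set SP}}) : projective V -> fV V \in PK.
Proof.
case/existsP => M /andP[/eqP Hr /eqP ->].
rewrite pencil_D fV_canon; last exact: pen_size.
rewrite PK_eq /PK0; apply/mapP; exists (entM M) => //; rewrite mem_filter -rank_iff Hr eqxx andTb.
by rewrite (allF_in (n:=8)) ?entM_lt.
Qed.

Lemma PK_proj x : x \in R -> x \in PK -> projective (Vs x).
Proof.
move=> HR; rewrite PK_eq /PK0 => /mapP[m]; rewrite mem_filter => /andP[Hm Hmf] Ex.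
have [Hvk Hf] := R_vk HR.
have EM : entM (mkM m) = m := entM_mkM Hmf.
have Hr : \rank (mkM m) = 2%N by apply/eqP; rewrite rank_iff EM.
apply/existsP; exists (mkM m); rewrite Hr eqxx andTb; apply/eqP.
apply: fV_inj; [exact: Hvk | exact: pencil_vk |].
by rewrite Hf pencil_D EM fV_canon ?Ex //; exact: pen_size.
Qed.

Lemma count130 : #|[set V : {set {set SP}} | veldkamp_line V && projective V]| = 130%N.
Proof.
rewrite -RPK_size; apply: count_lemma => [|V|V|x]; rewrite ?in_set.
- by apply: filter_uniq; apply: R_uniq.
- by case/andP.
- by case/andP => H1 H2; rewrite mem_filter proj_fV // vk_R.
- rewrite mem_filter => /andP[HPK HR]; have [H1 H2] := R_vk HR.
  by exists (Vs x); [rewrite in_set H1 PK_proj | exact: H2].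
Qed.

Lemma nonproj (V : {set {set SP}}) : veldkamp_line V -> ~~ projective V ->
  (forall h, h \in V -> ovoid h) /\
  (forall h1 h2, h1 \in V -> h2 \in V -> h1 != h2 -> [disjoint h1 & h2]).
Proof.
move=> HV HP; have HR := vk_R HV; have EV := Vrepr (vk_gh HV).
have HPK : fV V \notin PK.
  by apply/negP => H; move: HP; rewrite EV (PK_proj HR H).
have /allP/(_ _ HR) := P3c; rewrite HPK /= => /andP[/allP Ho /allP Hd].
split.
- by move=> h; rewrite EV inE => /mapP[s Hs ->]; rewrite ov_D Ho.
- move=> h1 h2; rewrite EV !inE => /mapP[s Hs ->] /mapP[t Ht ->] Hne.
  rewrite disj_D; have /allP/(_ t Ht) := Hd s Hs.
  by case/orP => // /eqP E; rewrite E eqxx in Hne.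
Qed.

Lemma count40 : #|[set H : {set SP} | geom_hyperplane H]| = 40%N.
Proof.
have -> : [set H : {set SP} | geom_hyperplane H] = [set y in map D hl].
  apply/setP => H; rewrite !in_set; apply/idP/mapP => [HH | [s Hs ->]]; last exact: hl_gh.
  have [i Hi ->] := gh_hl HH; exists (hl' i) => //; by rewrite /hl' mem_nth ?hl_size.
by rewrite (card_V hl_mem_size) undup_id ?hl_uniq // hl_size.
Qed.

Local Close Scope ring_scope.

Theorem mainTheorem2 :
  #|[set H : {set SP} | geom_hyperplane H]| = 40%N /\
  #|[set V : {set {set SP}} | veldkamp_line V]| = 136%N /\
  #|[set V : {set {set SP}} | veldkamp_line V && projective V]| = 130%N /\
  (forall M : 'M['F_3]_(2, 2 * 2), \rank M = 2%N -> veldkamp_line (pencil_sections M)) /\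
  (forall V : {set {set SP}}, veldkamp_line V -> ~~ projective V ->
     (forall h, h \in V -> ovoid h) /\
     (forall h1 h2, h1 \in V -> h2 \in V -> h1 != h2 -> [disjoint h1 & h2])).
Proof.
split; first exact: count40.
split; first exact: count136.
split; first exact: count130.
split; first exact: pencil_vk.
exact: nonproj.
Qed.
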